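(* Let $d\ge1$ and let $\mu={}^t(a_1,\dots,a_{2d+1})\in\mathbb{C}^{2d+1}$ be a unit vector with $|a_j|=|a_{d+1+j}|$ for $j=1,\dots,d$ and $a_{d+1}=0$. Let $C_\mu\phi=2\langle\phi,\mu\rangle\mu-\phi$. Then $U(S_{\rm lazy},\mathcal{P}_{\rm lazy},C_\mu)$ has both $1$ and $-1$ as eigenvalues.
   Context: $u_1,\dots,u_d$ standard basis of $\mathbb{Z}^d$, $\mathbf{e}_1,\dots,\mathbf{e}_{2d+1}$ standard basis of $\mathbb{C}^{2d+1}$, $P_j$ orthogonal projection onto $\mathbb{C}\mathbf{e}_j$. $S_{\rm lazy}=\{0,\pm u_1,\dots,\pm u_d\}$, $\mathcal{P}_{\rm lazy}=\{P_\alpha\}$ with $P_{u_j}=P_j$, $P_0=P_{d+1}$, $P_{-u_j}=P_{d+1+j}$. $(\tau^\alpha f)(x)=f(x-\alpha)$ on $\ell^2(\mathbb{Z}^d,\mathbb{C}^{2d+1})$, $U(S,\mathcal{P},C)=\big(\sum_{\alpha\in S}\tau^\alpha P_\alpha\big)C$ with $C$ acting pointwise; eigenvalue means point spectrum. Inner products are linear in the first argument. *)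

(* Defs.v *)
(* Complex scalars: an arbitrary numClosedFieldType C
   (C = the complex numbers is the intended instance). *)
From HB Require Import structures.
From mathcomp Require Import all_boot all_order all_algebra.
Set Implicit Arguments. Unset Strict Implicit. Unset Printing Implicit Defensive.
Import Order.TTheory GRing.Theory Num.Theory.
Local Open Scope ring_scope.

(* Sites of Z^d are row vectors 'rV[int]_d; the internal space C^(2d+1)
   is indexed by 'I_(2*d).+1, with 0-based indices: e_{m+1} <-> index m. *)

Definition zbasis (d m : nat) : 'rV[int]_d := \row_(i < d) ((val i == m)%:R).

(* the shift alpha attached to the internal index k (0-based):
   k < d  : P_k is P_{u_{k+1}}      (alpha = u_{k+1})
   k = d  : P_{d+1} = P_0           (alpha = 0)
   k > d  : P_{k+1} = P_{-u_{k-d}}  (alpha = - u_{k-d}) *)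
Definition lazy_shift (d : nat) (k : 'I_(2*d).+1) : 'rV[int]_d :=
  if (k < d)%N then zbasis d k
  else if k == d :> nat then 0
  else - zbasis d (k - d.+1)%N.

Definition cinner (C : numClosedFieldType) (n : nat) (phi psi : 'I_n -> C) : C :=
  \sum_(i < n) phi i * (psi i)^*.

Definition coin_mu (C : numClosedFieldType) (n : nat) (mu : 'I_n -> C)
  (phi : 'I_n -> C) : 'I_n -> C :=
  fun k => 2 * cinner phi mu * mu k - phi k.

(* U(S_lazy, P_lazy, C) f (x) = sum_alpha P_alpha (C f)(x - alpha) *)
Definition U_lazy (C : numClosedFieldType) (d : nat)
  (coin : ('I_(2*d).+1 -> C) -> ('I_(2*d).+1 -> C))
  (f : 'rV[int]_d -> 'I_(2*d).+1 -> C) : 'rV[int]_d -> 'I_(2*d).+1 -> C :=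
  fun x k => coin (f (x - lazy_shift k)) k.

Definition in_l2 (C : numClosedFieldType) (d : nat)
  (f : 'rV[int]_d -> 'I_(2*d).+1 -> C) : Prop :=
  exists M : C, forall s : seq 'rV[int]_d, uniq s ->
    \sum_(x <- s) \sum_(k < (2*d).+1) `|f x k| ^+ 2 <= M.

Definition is_eigenvalue (C : numClosedFieldType) (d : nat)
  (T : ('rV[int]_d -> 'I_(2*d).+1 -> C) -> ('rV[int]_d -> 'I_(2*d).+1 -> C))
  (lam : C) : Prop :=
  exists f : 'rV[int]_d -> 'I_(2*d).+1 -> C,
    [/\ in_l2 f, (exists x k, f x k != 0) & forall x k, T f x k = lam * f x k].

(* Main.v *)
Require Import Defs.
From HB Require Import structures.
From mathcomp Require Import all_boot all_order all_algebra zify.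
Import Order.TTheory GRing.Theory Num.Theory.
Local Open Scope ring_scope.
Set Implicit Arguments. Unset Strict Implicit.

Definition incube d (x : 'rV[int]_d) : bool :=
  [forall i : 'I_d, (x 0 i == 0) || (x 0 i == 1)].

Lemma incube_add d (y : 'rV[int]_d) m (hm : (m < d)%N) : incube y ->
  incube (y + zbasis d m) = (y 0 (Ordinal hm) == 0).
Proof.
move=> /forallP hy; apply/forallP/idP.
  move=> /(_ (Ordinal hm)); rewrite !mxE /= eqxx /=.
  have := hy (Ordinal hm); lia.
move=> H i; rewrite !mxE; have := hy i.
case hb: (_ == m) => /=.
  have ei : i = Ordinal hm by apply: val_inj; exact/eqP.
  move: H; rewrite -ei; lia.
lia.
Qed.

Lemma incube_sub d (y : 'rV[int]_d) m (hm : (m < d)%N) : incube y ->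
  incube (y - zbasis d m) = (y 0 (Ordinal hm) == 1).
Proof.
move=> /forallP hy; apply/forallP/idP.
  move=> /(_ (Ordinal hm)); rewrite !mxE /= eqxx /=.
  have := hy (Ordinal hm); lia.
move=> H i; rewrite !mxE; have := hy i.
case hb: (_ == m) => /=.
  have ei : i = Ordinal hm by apply: val_inj; exact/eqP.
  move: H; rewrite -ei; lia.
lia.
Qed.

Lemma incube_flip d (y : 'rV[int]_d) (k : 'I_(2*d).+1) : incube y -> val k != d ->
  incube (y + lazy_shift k) = ~~ incube (y - lazy_shift k).
Proof.
move=> hy hk; rewrite /lazy_shift.
case: ltnP => h1.
  rewrite incube_add // incube_sub //.
  move/forallP: hy => /(_ (Ordinal h1)); lia.
rewrite (negbTE hk).
have hk2 : (k < (2*d)%N.+1)%N := ltn_ord k.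
have hk3 : (nat_of_ord k != d)%N := hk.
have hm : (k - d.+1 < d)%N by move: hk2 h1 hk3; lia.
rewrite opprK incube_add // incube_sub //.
move/forallP: hy => /(_ (Ordinal hm)); lia.
Qed.

Lemma incube0 d : incube (0 : 'rV[int]_d).
Proof. by apply/forallP => i; rewrite mxE eqxx. Qed.

Definition sig d (k : 'I_(2*d).+1) : 'I_(2*d).+1 :=
  if (k < d)%N then inord (k + d.+1) else if nat_of_ord k == d then k else inord (k - d.+1).

Lemma val_sig d (k : 'I_(2*d).+1) : nat_of_ord (sig k) =
  if (k < d)%N then (k + d.+1)%N else if nat_of_ord k == d then nat_of_ord k else (k - d.+1)%N.
Proof.
have hk2 : (k < (2*d)%N.+1)%N := ltn_ord k.
rewrite /sig; case: ltnP => h1; first by apply: inordK; lia.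
case: ifP => h2 //; apply: inordK; lia.
Qed.

Lemma sigK d : involutive (@sig d).
Proof.
move=> k; have hk2 : (k < (2*d)%N.+1)%N := ltn_ord k.
apply: ord_inj; rewrite !val_sig.
case: (ltnP k d) => h1; last case: (boolP (nat_of_ord k == d)) => h2; repeat (case: ifP => ?); lia.
Qed.

Lemma shift_sig d (k : 'I_(2*d).+1) : lazy_shift (sig k) = - lazy_shift k.
Proof.
have hk2 : (k < (2*d)%N.+1)%N := ltn_ord k.
rewrite /lazy_shift val_sig; case: (ltnP k d) => h1.
  have -> : (k + d.+1 < d)%N = false by lia.
  have -> : ((k + d.+1)%N == d) = false by lia.
  by rewrite addnK.
case: (boolP (nat_of_ord k == d)) => h2.
  by rewrite (eqP h2) ltnn eqxx oppr0.
have -> : (k - d.+1 < d)%N = true by lia.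
by rewrite opprK.
Qed.

Lemma mud (C : numClosedFieldType) d (mu : 'I_(2*d).+1 -> C) (hmid : mu (inord d) = 0)
  (k : 'I_(2*d).+1) : nat_of_ord k = d -> mu k = 0.
Proof.
move=> hk; have -> : k = inord d; last by [].
apply: ord_inj; rewrite inordK ?hk //; lia.
Qed.

Lemma mu_sig (C : numClosedFieldType) d (mu : 'I_(2*d).+1 -> C)
  (hsym : forall j : 'I_d, `|mu (inord j)| = `|mu (inord (d + 1 + j))|)
  (k : 'I_(2*d).+1) : `|mu (sig k)| = `|mu k|.
Proof.
have hk2 : (k < (2*d)%N.+1)%N := ltn_ord k.
rewrite /sig; case: ltnP => h1.
  have := hsym (Ordinal h1); rewrite /= inord_val => ->.
  by have -> : (d + 1 + k = k + d.+1)%N by lia.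
case: eqP => h2 //.
have hm : (k - d.+1 < d)%N by lia.
have := hsym (Ordinal hm) => /= ->.
have -> : (d + 1 + (k - d.+1) = k)%N by lia.
by rewrite inord_val.
Qed.

Definition fvec (C : numClosedFieldType) d (mu : 'I_(2*d).+1 -> C)
  (x : 'rV[int]_d) (k : 'I_(2*d).+1) : C :=
  if incube x && incube (x - lazy_shift k) then mu k else 0.

Lemma half (C : numClosedFieldType) d (mu : 'I_(2*d).+1 -> C)
  (hunit : \sum_(i < (2*d).+1) `|mu i| ^+ 2 = 1)
  (hsym : forall j : 'I_d, `|mu (inord j)| = `|mu (inord (d + 1 + j))|)
  (hmid : mu (inord d) = 0) (y : 'rV[int]_d) :
  incube y -> 2 * cinner (fvec mu y) mu = 1.
Proof.
move=> hy.
set P := fun k : 'I_(2*d).+1 => incube (y - lazy_shift k).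
have eA : cinner (fvec mu y) mu = \sum_k (if P k then `|mu k| ^+ 2 else 0).
  rewrite /cinner; apply: eq_bigr => k _; rewrite /fvec hy /P /=.
  by case: ifP => _; rewrite ?mul0r // normCK.
have eAB : \sum_k (if P k then `|mu k| ^+ 2 else 0) =
           \sum_k (if ~~ P k then `|mu k| ^+ 2 else 0).
  rewrite (reindex_inj (inv_inj (@sigK d))) /=.
  apply: eq_bigr => k _.
  have [hk|hk] := eqVneq (val k) d.
    have -> : sig k = k by rewrite /sig hk ltnn eqxx.
    by rewrite (mud hmid hk) normr0 expr0n /=; case: ifP.
  rewrite mu_sig // /P shift_sig opprK incube_flip //.
have eS : \sum_k (if P k then `|mu k| ^+ 2 else 0) +
          \sum_k (if ~~ P k then `|mu k| ^+ 2 else 0) = 1.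
  rewrite -big_split /= -hunit; apply: eq_bigr => k _.
  by case: (P k); rewrite /= ?addr0 ?add0r.
by rewrite eA mulr_natl mulr2n {2}eAB.
Qed.

Lemma shift_d d (k : 'I_(2*d).+1) : nat_of_ord k = d -> lazy_shift k = 0.
Proof. by move=> hk; rewrite /lazy_shift hk ltnn eqxx. Qed.

Lemma l2_fin (C : numClosedFieldType) d (f : 'rV[int]_d -> 'I_(2*d).+1 -> C)
  (t : seq 'rV[int]_d) : (forall x, x \notin t -> forall k, f x k = 0) -> in_l2 f.
Proof.
move=> ht; exists (\sum_(x <- undup t) \sum_(k < (2*d).+1) `|f x k| ^+ 2) => s us.
have -> : \sum_(x <- s) \sum_(k < (2*d).+1) `|f x k| ^+ 2 =
          \sum_(x <- s | x \in t) \sum_(k < (2*d).+1) `|f x k| ^+ 2.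
  rewrite [RHS]big_mkcond /=; apply: eq_bigr => x _; case: ifPn => // hx.
  by rewrite big1 // => k _; rewrite ht // normr0 expr0n.
set N := fun x => \sum_(k < (2*d).+1) `|f x k| ^+ 2.
have hN : forall x, 0 <= N x.
  by move=> x; apply: sumr_ge0 => k _; exact: exprn_ge0.
have e1 : \sum_(x <- undup t) N x =
   \sum_(x <- undup t | x \in s) N x + \sum_(x <- undup t | x \notin s) N x.
  exact: bigID.
have e2 : \sum_(x <- undup t | x \in s) N x = \sum_(x <- s | x \in t) N x.
  rewrite -big_filter -[RHS]big_filter; apply: perm_big; apply: uniq_perm.
  - by rewrite filter_uniq // undup_uniq.
  - by rewrite filter_uniq.
  - by move=> x; rewrite !mem_filter mem_undup andbC.
rewrite e1 e2 lerDl; apply: sumr_ge0 => x _; exact: hN.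

Qed.

Definition phi d (b : 'rV[bool]_d) : 'rV[int]_d := map_mx (fun z : bool => (z : nat)%:R) b.

Lemma cube_mem d (x : 'rV[int]_d) : incube x -> x \in map (@phi d) (enum 'rV[bool]_d).
Proof.
move=> hx; apply/mapP; exists (map_mx (fun z : int => z == 1) x); first by rewrite mem_enum.
apply/matrixP => i j; rewrite !mxE [i]ord1.
by move/forallP: hx => /(_ j); case/orP => /eqP ->.
Qed.

Definition gvec (C : numClosedFieldType) d (x : 'rV[int]_d) (k : 'I_(2*d).+1) : C :=
  if (x == 0) && (nat_of_ord k == d) then 1 else 0.

Theorem theorem3p5 (C : numClosedFieldType) (d : nat) (hd : (1 <= d)%N)
  (mu : 'I_(2*d).+1 -> C)
  (hunit : \sum_(i < (2*d).+1) `|mu i| ^+ 2 = 1)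
  (hsym : forall j : 'I_d, `|mu (inord j)| = `|mu (inord (d + 1 + j))|)
  (hmid : mu (inord d) = 0) :
  is_eigenvalue (U_lazy (coin_mu mu)) 1 /\ is_eigenvalue (U_lazy (coin_mu mu)) (-1).
Proof.
split.
  exists (fvec mu); split.
  - apply: (@l2_fin _ _ _ (map (@phi d) (enum 'rV[bool]_d))) => x hx k.
    rewrite /fvec; case: ifP => // /andP[hc _].
    by move: hx; rewrite cube_mem.
  - have [k hk] : exists k, mu k != 0.
      case: (boolP [exists k, mu k != 0]) => [/existsP //|/existsPn hn].
      rewrite big1 in hunit => [|i _].
        by move/eqP: hunit; rewrite eq_sym oner_eq0.
      by have := hn i; rewrite negbK => /eqP ->; rewrite normr0 expr0n.
    have hkd : nat_of_ord k != d.
      by apply/eqP => e; move: hk; rewrite (mud hmid e) eqxx.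
    case hc: (incube (0 + lazy_shift k)).
      exists (lazy_shift k), k; rewrite /fvec subrr incube0 -(add0r (lazy_shift k)) hc.
      by [].
    exists 0, k; rewrite /fvec incube0 -[incube (0 - _)]negbK -incube_flip ?hc //.
    exact: incube0.
  - move=> x k; rewrite /U_lazy /coin_mu mul1r.
    set y := x - lazy_shift k.
    case hy: (incube y).
      rewrite half // mul1r /fvec hy /=.
      have -> : incube x = incube (y + lazy_shift k) by rewrite /y subrK.
      rewrite andbT.
      have [hk|hk] := eqVneq (nat_of_ord k) d.
        by rewrite (mud hmid hk); case: ifP; case: ifP; rewrite ?subrr.
      rewrite incube_flip //.
      by case: (incube (y - lazy_shift k)); rewrite /= ?subrr ?subr0.
    have -> : cinner (fvec mu y) mu = 0.
      by rewrite /cinner big1 // => i _; rewrite /fvec hy /= mul0r.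
    by rewrite /fvec hy -/y andbF /= mulr0 mul0r subrr.
exists (@gvec C d); split.
- apply: (@l2_fin _ _ _ [:: 0]) => x hx k.
  by rewrite /gvec; move: hx; rewrite inE => /negbTE ->.
- exists 0, (inord d); rewrite /gvec eqxx inordK ?eqxx ?oner_eq0 //; lia.
- move=> x k; rewrite /U_lazy /coin_mu.
  have -> : cinner (gvec C (x - lazy_shift k)) mu = 0.
    rewrite /cinner big1 // => i _; rewrite /gvec.
    case: ifP => [/andP[_ /eqP hi]|_]; last by rewrite mul0r.
    by rewrite (mud hmid hi) conjC0 mulr0.
  rewrite mulr0 mul0r sub0r mulN1r; congr (- _).
  have [hk|hk] := eqVneq (nat_of_ord k) d.
    by rewrite shift_d // subr0.
  by rewrite /gvec (negbTE hk) !andbF.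
Qed.
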